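(* Let $N\ge1$ and let $\lambda$ be a partition with $l(\lambda)\le N$. Then in $\mathbb Q(q,t)$: $$\frac{c_\lambda(q,t)}{\prod_{s\in\lambda}\bigl(1-q^{a'(s)}t^{N-l'(s)}\bigr)}=\frac{c_{\overline\lambda}(q,t)}{\prod_{s\in\overline\lambda}\bigl(1-q^{a'(s)}t^{N-l'(s)}\bigr)},\qquad \frac{c'_\lambda(q,t)}{\prod_{s\in\lambda}\bigl(1-q^{a'(s)+1}t^{N-1-l'(s)}\bigr)}=\frac{c'_{\overline\lambda}(q,t)}{\prod_{s\in\overline\lambda}\bigl(1-q^{a'(s)+1}t^{N-1-l'(s)}\bigr)},$$ where arm/leg quantities in products over $\overline\lambda$ are computed in $\overline\lambda$.
   Context: Partitions $\lambda=(\lambda_1\ge\lambda_2\ge\cdots)$ are identified with Young diagrams $\{(i,j): i\ge1,\ 1\le j\le\lambda_i\}$; $\lambda^t$ is the transpose, $l(\lambda)$ the number of nonzero parts. For a box $s=(i,j)\in\lambda$: arm $a(s)=\lambda_i-j$, leg $l(s)=\lambda^t_j-i$, arm-colength $a'(s)=j-1$, leg-colength $l'(s)=i-1$. Set $c_\lambda(q,t)=\prod_{s\in\lambda}(1-q^{a(s)}t^{l(s)+1})$, $c'_\lambda(q,t)=\prod_{s\in\lambda}(1-q^{a(s)+1}t^{l(s)})$. For $l(\lambda)\le N$, $\overline{\lambda}=(\lambda_1-\lambda_N,\dots,\lambda_{N-1}-\lambda_N)$ (remove all columns of height $N$). (Note the denominators are never identically zero for $l(\lambda)\le N$, as $l'(s)\le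 N-1$.) *)

(* Defs.v *)
(* Q(q,t) is the fraction field of {poly {poly rat}}:
   q = the inner variable (constant polynomial 'X%:P), t = the outer variable 'X. *)
From HB Require Import structures.
From mathcomp Require Import all_boot all_order all_algebra.
Set Implicit Arguments. Unset Strict Implicit. Unset Printing Implicit Defensive.
Import Order.TTheory GRing.Theory Num.Theory.
Local Open Scope ring_scope.

Definition is_partition (la : seq nat) : bool :=
  sorted geq la && all (fun x => 0 < x)%N la.

Definition lenp (la : seq nat) : nat := count (fun x => 0 < x)%N la.

(* Boxes are indexed 0-based: row i (paper row i+1), column j (paper column j+1),
   with i < size la and j < nth 0 la i. Zero parts contribute no boxes. *)
(* transpose: la^t_{j+1} = number of rows of length > j *)
Definition conjp (la : seq nat) (j : nat) : nat := count (fun x => j < x)%N la.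
Definition arm  (la : seq nat) (i j : nat) : nat := (nth 0 la i - j.+1)%N.
Definition leg  (la : seq nat) (i j : nat) : nat := (conjp la j - i.+1)%N.
Definition armco (i j : nat) : nat := j.   (* a'(s) = paper column - 1 *)
Definition legco (i j : nat) : nat := i.   (* l'(s) = paper row - 1 *)

Definition QT := {fraction {poly {poly rat}}}.
Definition qv : QT := tofrac (('X : {poly rat})%:P).
Definition tv : QT := tofrac ('X : {poly {poly rat}}).

Definition boxprod (la : seq nat) (F : nat -> nat -> QT) : QT :=
  \prod_(i < size la) \prod_(j < nth 0 la i) F i j.

Definition c_la (la : seq nat) : QT :=
  boxprod la (fun i j => 1 - qv ^+ arm la i j * tv ^+ (leg la i j).+1).
Definition c'_la (la : seq nat) : QT :=
  boxprod la (fun i j => 1 - qv ^+ (arm la i j).+1 * tv ^+ leg la i j).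

Definition labar (N : nat) (la : seq nat) : seq nat :=
  [seq (x - nth 0 la N.-1)%N | x <- take N.-1 la].

Definition den1 (N : nat) (la : seq nat) : QT :=
  boxprod la (fun i j => 1 - qv ^+ armco i j * tv ^+ (N - legco i j)).
Definition den2 (N : nat) (la : seq nat) : QT :=
  boxprod la (fun i j => 1 - qv ^+ (armco i j).+1 * tv ^+ (N - 1 - legco i j)).

(* Main.v *)
Require Import Defs.
From HB Require Import structures.
From mathcomp Require Import all_boot all_order all_algebra.
From mathcomp Require Import ring lra zify.
Import GRing.Theory.
Local Open Scope ring_scope.

Lemma boxprod_nat (la : seq nat) (F : nat -> nat -> QT) (n : nat) :
  (size la <= n)%N ->
  boxprod la F = \prod_(0 <= i < n) \prod_(0 <= j < nth 0 la i) F i j.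
Proof.
move=> H.
transitivity (\prod_(0 <= i < size la) \prod_(0 <= j < nth 0 la i) F i j).
  rewrite /boxprod big_mkord; apply: eq_bigr => i _; by rewrite big_mkord.
rewrite (big_cat_nat (n:=size la) (leq0n _) H) /= [X in _ * X]big1_seq ?mulr1 // => i.
move=> /andP[_]; rewrite mem_index_iota => /andP[Hi _].
by rewrite nth_default // big_geq.
Qed.

Lemma row_id (R : comPzRingType) (m L : nat) (Fla Fbar g : nat -> R) :
  (m <= L)%N ->
  (forall j, (m <= j < L)%N -> Fla j = Fbar (j - m)%N) ->
  (forall j, (j < m)%N -> Fla j = g (L - j.+1)%N) ->
  \prod_(0 <= j < L) Fla j * \prod_(0 <= j < L - m) g j =
  \prod_(0 <= j < L - m) Fbar j * \prod_(0 <= j < L) g j.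
Proof.
move=> mL H1 H2.
rewrite (big_cat_nat (n:=m) (leq0n m) mL) /=.
rewrite [in RHS](big_cat_nat (n:=L-m) (leq0n (L - m)) (leq_subr m L)) /=.
have EB : \prod_(m <= j < L) Fla j = \prod_(0 <= j < L - m) Fbar j.
  rewrite -{1}(add0n m) big_addn; apply: eq_big_nat => i /andP[_ Hi].
  rewrite H1; first by rewrite addnK.
  apply/andP; split; lia.
have EA : \prod_(0 <= j < m) Fla j = \prod_(L - m <= j < L) g j.
  rewrite -{1}(add0n (L - m)%N) big_addn big_nat_rev /=.
  rewrite subKn //.
  apply: eq_big_nat => i /andP[_ Hi].
  rewrite H2; last by lia.
  congr g; lia.
rewrite EB EA; ring.
Qed.

Lemma div_cross (F : fieldType) (x y z t : F) :
  y != 0 -> t != 0 -> x * t = z * y -> x / y = z / t.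
Proof.
move=> hy ht E.
have -> : x = z * y / t by rewrite -E mulfK.
by rewrite mulrAC mulfK.
Qed.

Lemma fac_neq0 (a b : nat) : (0 < a + b)%N -> 1 - qv ^+ a * tv ^+ b != 0.
Proof.
move=> ab.
have -> : 1 - qv ^+ a * tv ^+ b =
   tofrac (1 - (('X : {poly rat})%:P ^+ a) * ('X : {poly {poly rat}}) ^+ b).
  by rewrite tofracB tofracM !tofracXn tofrac1 /qv /tv.
rewrite tofrac_eq0; apply/negP => /eqP E.
have := congr1 (fun p : {poly {poly rat}} => (p.[0]).[0]) E.
rewrite /= !hornerE; clear E.
case: a ab => [|a]; case: b => [|b] //= _; rewrite ?expr0n /= ?mulr0 ?mul0r subr0;
  by move/eqP; rewrite oner_eq0.
Qed.

Theorem lemma2p4 (N : nat) (la : seq nat) :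
  (1 <= N)%N -> is_partition la -> (lenp la <= N)%N ->
  c_la la / den1 N la = c_la (labar N la) / den1 N (labar N la) /\
  c'_la la / den2 N la = c'_la (labar N la) / den2 N (labar N la).
Proof.
move=> N1 Hp Hl.
set lb := labar N la.
set m := nth 0%N la N.-1.
move: Hp => /andP[Hsort Hpos].
have Hsz : (size la <= N)%N.
  by move: Hl; rewrite /lenp; move: Hpos; rewrite all_count => /eqP ->.
have Hszb : (size lb <= N)%N.
  rewrite /lb /labar size_map size_take; case: ifP => _; lia.
have Hge : forall i, (i < N)%N -> (m <= nth 0 la i)%N.
  move=> i Hi; rewrite /m.
  case: (ltnP N.-1 (size la)) => HN; last by rewrite (nth_default 0 HN).
  have := sorted_leq_nth (leT := geq) (fun a b c h1 h2 => leq_trans h2 h1) leqnn 0 Hsort.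
  move=> /(_ i N.-1); rewrite !inE; apply => //; lia.
have Hnth : forall i, (i < N)%N -> nth 0 lb i = (nth 0 la i - m)%N.
  move=> i Hi; rewrite /lb /labar.
  case: (ltnP i (size (take N.-1 la))) => Hs.
    rewrite (nth_map 0) // nth_take //; move: Hs; rewrite size_take; case: ifP; lia.
  rewrite nth_default ?size_map //.
  move: Hs; rewrite size_take; case: ifP => Hc Hs.
    have -> : i = N.-1 by lia.
    by rewrite subnn.
  by rewrite nth_default.
have Hconj_lt : forall j, (j < m)%N -> conjp la j = N.
  move=> j Hj.
  have HN : (N.-1 < size la)%N.
    rewrite ltnNge; apply/negP => HN; move: Hj; rewrite /m nth_default //.
  have -> : N = size la by lia.
  apply/eqP; rewrite /conjp -all_count; apply/allP => x xin.
  have [k kl <-] := nthP 0%N xin.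
  have Hk : (k < N)%N by apply: leq_trans kl Hsz.
  exact: leq_trans Hj (Hge k Hk).
have Hconj_ge : forall j, (m <= j)%N -> conjp la j = conjp lb (j - m).
  move=> j Hj; rewrite /conjp /lb /labar count_map.
  rewrite -{1}(cat_take_drop N.-1 la) count_cat.
  have -> : count (fun x => (j < x)%N) (drop N.-1 la) = 0%N.
    rewrite (eq_in_count (a2 := pred0)) ?count_pred0 // => x xin /=.
    have [k kl <-] := nthP 0%N xin.
    rewrite nth_drop; move: kl; rewrite size_drop => kl.
    have kl2 : (k < size la - N.-1)%N := kl.
    have k0 : k = 0%N by clear -kl2 Hsz N1; lia.
    rewrite k0 addn0 -/m; apply/negbTE; rewrite -leqNgt //.
  have E : count (fun x => (j < x)%N) (take N.-1 la) =
     count (preim (subn^~ m) (fun x => (j - m < x)%N)) (take N.-1 la).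
    by apply: eq_count => x /=; lia.
  by rewrite E addn0.
have D1 : den1 N la != 0.
  apply/prodf_neq0 => i _; apply/prodf_neq0 => j _; apply: fac_neq0.
  rewrite /legco; have := ltn_ord i; lia.
have D1b : den1 N lb != 0.
  apply/prodf_neq0 => i _; apply/prodf_neq0 => j _; apply: fac_neq0.
  rewrite /legco; have := ltn_ord i; lia.
have D2 : den2 N la != 0.
  apply/prodf_neq0 => i _; apply/prodf_neq0 => j _; apply: fac_neq0; lia.
have D2b : den2 N lb != 0.
  apply/prodf_neq0 => i _; apply/prodf_neq0 => j _; apply: fac_neq0; lia.
split.
  apply: (div_cross _ _ _ _ _ D1 D1b).
  rewrite /c_la /den1 !(boxprod_nat _ _ _ Hsz) !(boxprod_nat _ _ _ Hszb) -!big_split /=.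
  apply: eq_big_nat => i /andP[_ Hi]; rewrite Hnth //.
  apply: (row_id _ _ _ _ _ _ (Hge i Hi)).
    move=> j /andP[Hmj HjL]; rewrite /arm /leg Hnth // Hconj_ge //.
    congr (1 - qv ^+ _ * tv ^+ _); lia.
  move=> j Hj; rewrite /arm /leg /armco /legco Hconj_lt //.
  congr (1 - qv ^+ _ * tv ^+ _); lia.
apply: (div_cross _ _ _ _ _ D2 D2b).
rewrite /c'_la /den2 !(boxprod_nat _ _ _ Hsz) !(boxprod_nat _ _ _ Hszb) -!big_split /=.
apply: eq_big_nat => i /andP[_ Hi]; rewrite Hnth //.
apply: (row_id _ _ _ _ _ _ (Hge i Hi)).
  move=> j /andP[Hmj HjL]; rewrite /arm /leg Hnth // Hconj_ge //.
  congr (1 - qv ^+ _ * tv ^+ _); lia.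
move=> j Hj; rewrite /arm /leg /armco /legco Hconj_lt //.
congr (1 - qv ^+ _ * tv ^+ _); lia.
Qed.
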